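(* Let $a$ be a positive integer. If there exists a Hadamard matrix of order $4a$, then there exists a $(4a-2)$--$\mathrm{MOFR}(4,2a;2)$.
   Context: A Hadamard matrix of order $N$ is an $N\times N$ matrix $H$ with entries in $\{1,-1\}$ satisfying $HH^T=NI_N$. A frequency rectangle of type $\mathrm{FR}(m,n;q)$ is an $m\times n$ array on a symbol set of size $q$ in which each symbol appears exactly $n/q$ times in each row and $m/q$ times in each column. Two frequency rectangles of the same type are orthogonal if upon superimposition each ordered pair of symbols appears the same number of times. A $k$--$\mathrm{MOFR}(m,n;q)$ is a set of $k$ pairwise orthogonal frequency rectangles of type $\mathrm{FR}(m,n;q)$. *)

(* Defs.v *)
From mathcomp Require Import all_boot all_order all_algebra.
Set Implicit Arguments. Unset Strict Implicit. Unset Printing Implicit Defensive.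
Import GRing.Theory Num.Theory.

Definition hadamard (N : nat) (H : 'M[int]_N) : Prop :=
  (forall i j, H i j = 1%R \/ H i j = (-1)%R) /\
  (H *m H^T = (N%:R)%:M)%R.

Definition freq_rect (m n q : nat) (F : 'M['I_q]_(m, n)) : Prop :=
  (q %| n) /\ (q %| m) /\
  (forall (i : 'I_m) (s : 'I_q), #|[set j : 'I_n | F i j == s]| = n %/ q) /\
  (forall (j : 'I_n) (s : 'I_q), #|[set i : 'I_m | F i j == s]| = m %/ q).

Definition orth_fr (m n q : nat) (F G : 'M['I_q]_(m, n)) : Prop :=
  exists c : nat, forall s t : 'I_q,
    #|[set p : 'I_m * 'I_n | (F p.1 p.2 == s) && (G p.1 p.2 == t)]| = c.

Definition MOFR (k m n q : nat) (Fs : 'I_k -> 'M['I_q]_(m, n)) : Prop :=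
  (forall r, freq_rect (Fs r)) /\
  (forall r r', r != r' -> orth_fr (Fs r) (Fs r')).

(* Main.v *)
Require Import Defs.
From mathcomp Require Import all_boot all_order all_algebra.
From mathcomp Require Import zify ring lra.
Set Implicit Arguments. Unset Strict Implicit. Unset Printing Implicit Defensive.
Import GRing.Theory Num.Theory.
Local Open Scope ring_scope.

Lemma card_pm1 (T : finType) (f : T -> int) (e : int) :
  (forall t, f t = 1 \/ f t = -1) -> (e = 1 \/ e = -1) ->
  (#|[set t | f t == e]| * 2)%:Z = \sum_t (1 + e * f t).
Proof.
move=> hf he.
rewrite (eq_bigr (fun t => if f t == e then 2 else 0)); last first.
  by move=> t _; case: (hf t) => ->; case: he => ->.
rewrite -big_mkcond /= sumr_const cardsE.
lia.
Qed.

Lemma card_pm1_2 (T : finType) (f g : T -> int) (e e' : int) :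
  (forall t, f t = 1 \/ f t = -1) -> (forall t, g t = 1 \/ g t = -1) ->
  (e = 1 \/ e = -1) -> (e' = 1 \/ e' = -1) ->
  (#|[set t | (f t == e) && (g t == e')]| * 4)%:Z =
    \sum_t (1 + e * f t) * (1 + e' * g t).
Proof.
move=> hf hg he he'.
rewrite (eq_bigr (fun t => if (f t == e) && (g t == e') then 4 else 0)); last first.
  by move=> t _; case: (hf t) => ->; case: (hg t) => ->; case: he => ->; case: he' => ->.
rewrite -big_mkcond /= sumr_const cardsE.
lia.
Qed.
Lemma split_perm (N : nat) (P : {set 'I_N}) (d : 'I_N) :
  exists s : nat -> 'I_N, injective (fun k : 'I_N => s k) /\
    (forall k, (k < #|P|)%N -> s k \in P) /\
    (forall k, (#|P| <= k < N)%N -> s k \notin P).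
Proof.
pose l := enum P ++ enum (~: P).
have szl : size l = N by rewrite size_cat -!cardE cardsC card_ord.
have ul : uniq l.
  rewrite cat_uniq !enum_uniq andbT /=; apply/hasP => -[x].
  by rewrite !mem_enum in_setC => /negP.
exists (fun k => nth d l k); split; [|split].
- move=> k k' /eqP; rewrite nth_uniq ?szl //; first by move/eqP/val_inj.
- move=> k kP; rewrite nth_cat -cardE kP.
  by rewrite -(mem_enum (mem P)) mem_nth // -cardE.
- move=> k /andP[kP kN]; rewrite nth_cat -cardE ltnNge kP /=.
  have : nth d (enum (~: P)) (k - #|P|) \in enum (~: P).
    apply: mem_nth; rewrite -cardE; have := cardsC P; rewrite card_ord. move=> hh; rewrite ltn_subLR // hh //.
  by move=> /[!mem_enum]; rewrite in_setC.
Qed.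

Lemma split_sum (a : nat) (F : nat -> int) :
  \sum_(k < 4 * a) F k = \sum_(j < 2 * a) F j + \sum_(j < 2 * a) F (j + 2 * a)%N.
Proof.
rewrite -!(big_mkord xpredT) (big_cat_nat _ (n := (2 * a)%N)) //=; last by lia.
have -> : \sum_(2 * a <= i < 4 * a) F i = \sum_(0 <= i < 2 * a) F (i + 2 * a)%N.
  rewrite -{1}[(2 * a)%N]add0n big_addn.
  by have -> : (4 * a - 2 * a = 2 * a)%N by lia.
by rewrite !big_mkord.
Qed.

Lemma sum_aff (T : finType) (f : T -> int) (e : int) :
  \sum_t (1 + e * f t) = #|T|%:Z + e * \sum_t f t.
Proof. by rewrite big_split /= sumr_const mulr_sumr natz. Qed.

Lemma sum_aff2 (T : finType) (f g : T -> int) (e e' : int) :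
  \sum_t (1 + e * f t) * (1 + e' * g t) =
  #|T|%:Z + e * \sum_t f t + e' * \sum_t g t + e * e' * \sum_t f t * g t.
Proof.
rewrite (eq_bigr (fun t => 1 + e * f t + e' * g t + e * e' * (f t * g t))); last first.
  by move=> t _; ring.
by rewrite !big_split /= sumr_const !mulr_sumr natz.
Qed.

Definition sym (x : int) : 'I_2 := if x == 1 then ord0 else ord_max.
Definition eps (s : 'I_2) : int := if s == ord0 then 1 else -1.

Lemma symE x s : x = 1 \/ x = -1 -> (sym x == s) = (x == eps s).
Proof.
rewrite /sym /eps; case: s => [[|[|//]]] ? /=; by case=> ->.
Qed.

Lemma eps_pm s : eps s = 1 \/ eps s = -1.
Proof. rewrite /eps; case: ifP; by [left|right]. Qed.

Lemma AB_lemma (A B : int) : A + B = 0 -> A - B = 0 -> A = 0 /\ B = 0.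
Proof. lia. Qed.

Lemma CD_lemma (C D : int) : C + D = 0 -> C + (C + (D + (D + 0))) = 0.
Proof. lia. Qed.

Lemma L2 (n m : nat) : (n * 2 = 2 * m)%N -> n = m.
Proof. lia. Qed.

Lemma L4 (n : nat) : (n * 2 = 4)%N -> n = (4 %/ 2)%N.
Proof. move=> h; rewrite /=; lia. Qed.

Lemma L8 (n m : nat) : (n * 4 = 4 * m)%N -> n = m.
Proof. lia. Qed.

Lemma main_aux (a : nat) : (0 < a)%N -> (exists H : 'M[int]_(4 * a), hadamard H) ->
  exists Fs : 'I_(4 * a - 2) -> 'M['I_2]_(4, 2 * a), MOFR Fs.
Proof.
move=> a0 [H [Hpm HH]].
have hH : forall i j, \sum_k H i k * H j k = if i == j then (4 * a)%:Z else 0.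
  move=> i j; have := congr1 (fun M : 'M[int]_(4 * a) => M i j) HH; rewrite !mxE => e.
  transitivity (\sum_k H i k * H^T k j); first by apply: eq_bigr => k _; rewrite mxE.
  by rewrite e; case: eqP => _; rewrite ?mulr1n ?mulr0n ?natz.
have N0 : (0 < 4 * a)%N by lia.
have N1 : (1 < 4 * a)%N by lia.
pose d : 'I_(4 * a) := Ordinal N0.
pose h0 := d.
pose h1 : 'I_(4 * a) := Ordinal N1.
have h01 : h0 != h1 by [].
have HpmM : forall i j k, H i k * H j k = 1 \/ H i k * H j k = -1.
  by move=> i j k; case: (Hpm i k) => ->; case: (Hpm j k) => ->; auto.
pose P := [set j | H h0 j * H h1 j == 1].
have cardP : #|P| = (2 * a)%N.
  have := card_pm1 (f := fun j => H h0 j * H h1 j) (HpmM h0 h1) (or_introl erefl).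
  rewrite sum_aff hH (negbTE h01) mulr0 addr0 card_ord -/P.
  move/eqP; rewrite eqz_nat => /eqP; lia.
have [s [sinj [sP snP]]] := split_perm P d.
rewrite cardP in sP snP.
have rowP : forall r : 'I_(4 * a - 2), (r.+2 < 4 * a)%N.
  by move=> r; have := ltn_ord r; lia.
pose rowi := fun r : 'I_(4 * a - 2) => Ordinal (rowP r).
have rowi0 : forall r, rowi r != h0 by [].
have rowi1 : forall r, rowi r != h1 by [].
have rowiI : forall r r', r != r' -> rowi r != rowi r'.
  move=> r r' ne; apply: contraNneq ne => /(congr1 val) /= [] e; exact/eqP/val_inj.
pose W := fun (r : 'I_(4 * a - 2)) (n : nat) => H (rowi r) (s n) * H h0 (s n).
pose Z := fun n : nat => H h0 (s n) * H h1 (s n).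
have Wpm : forall r n, W r n = 1 \/ W r n = -1 by move=> r n; exact: HpmM.
have HH0 : forall k, H h0 k * H h0 k = 1 by move=> k; case: (Hpm h0 k) => ->.
have reidx : forall F : 'I_(4 * a) -> int, \sum_(k < 4 * a) F (s k) = \sum_k F k.
  by move=> F; rewrite [RHS](reindex_inj sinj).
have sumW : forall r, \sum_(k < 4 * a) W r k = 0.
  by move=> r; rewrite (reidx (fun j => H (rowi r) j * H h0 j)) hH (negbTE (rowi0 r)).
have sumWZ : forall r, \sum_(k < 4 * a) W r k * Z k = 0.
  move=> r; transitivity (\sum_k H (rowi r) k * H h1 k); last first.
    by rewrite hH (negbTE (rowi1 r)).
  rewrite -(reidx (fun j => H (rowi r) j * H h1 j)); apply: eq_bigr => k _.
  by rewrite /W /Z mulrA -(mulrA (H (rowi r) (s k))) HH0 mulr1.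
have sumWW : forall r r', r != r' -> \sum_(k < 4 * a) W r k * W r' k = 0.
  move=> r r' ne; transitivity (\sum_k H (rowi r) k * H (rowi r') k); last first.
    by rewrite hH (negbTE (rowiI _ _ ne)).
  rewrite -(reidx (fun j => H (rowi r) j * H (rowi r') j)); apply: eq_bigr => k _.
  rewrite /W -!mulrA; congr (_ * _); rewrite mulrC -!mulrA HH0 mulr1 //.
have Zlo : forall j, (j < 2 * a)%N -> Z j = 1.
  by move=> j /sP; rewrite inE => /eqP.
have Zhi : forall j, (2 * a <= j < 4 * a)%N -> Z j = -1.
  move=> j /snP; rewrite inE /Z; case: (HpmM h0 h1 (s j)) => -> //.
have AB : forall r, \sum_(j < 2 * a) W r j = 0 /\ \sum_(j < 2 * a) W r (j + 2 * a)%N = 0.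
  move=> r; have e1 := sumW r; have e2 := sumWZ r.
  rewrite (split_sum a (W r)) in e1.
  rewrite (split_sum a (fun k => W r k * Z k)) in e2.
  have e3 : \sum_(j < 2 * a) W r j - \sum_(j < 2 * a) W r (j + 2 * a)%N = 0.
    apply: etrans e2; rewrite -sumrN; congr (_ + _); apply: eq_bigr => j _ /=.
      by rewrite Zlo ?mulr1 ?ltn_ord.
    by rewrite Zhi ?mulrN1 //; have := ltn_ord j; lia.
  exact: AB_lemma e1 e3.
have CD : forall r r', r != r' -> \sum_(j < 2 * a) W r j * W r' j +
    \sum_(j < 2 * a) W r (j + 2 * a)%N * W r' (j + 2 * a)%N = 0.
  by move=> r r' ne; rewrite -(split_sum a (fun k => W r k * W r' k)) sumWW.
pose V := fun r (i : 'I_4) (j : 'I_(2 * a)) =>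
  (if odd i then -1 else 1) * W r (if (i < 2)%N then (j : nat) else (j + 2 * a)%N).
have Vpm : forall r i j, V r i j = 1 \/ V r i j = -1.
  by move=> r i j; rewrite /V; case: (odd i); case: (Wpm r (if (i < 2)%N then (j : nat) else (j + 2 * a)%N)) => ->; auto.
have rowsum : forall r i, \sum_j V r i j = 0.
  move=> r i; rewrite /V -mulr_sumr; case: (AB r) => A B.
  by case: (i < 2)%N; rewrite ?A ?B mulr0.
have colsum : forall r j, \sum_(i < 4) V r i j = 0.
  move=> r j; rewrite !big_ord_recl big_ord0 /V /=; ring.
have Vsq : forall r r' i j, V r i j * V r' i j =
    W r (if (i < 2)%N then (j : nat) else (j + 2 * a)%N) * W r' (if (i < 2)%N then (j : nat) else (j + 2 * a)%N).
  by move=> r r' i j; rewrite /V; case: (odd i); rewrite ?mul1r ?mulN1r ?mulrNN.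
have innsum : forall r r', r != r' -> \sum_(i < 4) \sum_j V r i j * V r' i j = 0.
  move=> r r' ne; under eq_bigr => i _ do under eq_bigr => j _ do rewrite Vsq.
  rewrite !big_ord_recl big_ord0 /=; exact: CD_lemma (CD r r' ne).
pose Fs := fun r => \matrix_(i < 4, j < 2 * a) sym (V r i j).
exists Fs; split.
- move=> r; split; first exact: dvdn_mulr.
  split; first by [].
  split.
  + move=> i t.
    have -> : [set j | Fs r i j == t] = [set j | V r i j == eps t].
      by apply/setP => j; rewrite !inE mxE symE.
    have := card_pm1 (f := V r i) (Vpm r i) (eps_pm t).
    rewrite sum_aff rowsum mulr0 addr0 card_ord.
    move/eqP; rewrite eqz_nat => /eqP.
    have -> : (2 * a %/ 2 = a)%N by rewrite mulKn.
    exact: L2.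
  + move=> j t.
    have -> : [set i | Fs r i j == t] = [set i | V r i j == eps t].
      by apply/setP => i; rewrite !inE mxE symE.
    have := card_pm1 (f := fun i => V r i j) (fun i => Vpm r i j) (eps_pm t).
    rewrite sum_aff colsum mulr0 addr0 card_ord.
    move/eqP; rewrite eqz_nat => /eqP /=; exact: L4.
- move=> r r' ne; exists (2 * a)%N => t t'.
  have -> : [set p | (Fs r p.1 p.2 == t) && (Fs r' p.1 p.2 == t')] =
      [set p : 'I_4 * 'I_(2 * a) | (V r p.1 p.2 == eps t) && (V r' p.1 p.2 == eps t')].
    by apply/setP => p; rewrite !inE !mxE !symE.
  have := card_pm1_2 (f := fun p : 'I_4 * 'I_(2 * a) => V r p.1 p.2)
     (g := fun p => V r' p.1 p.2) (fun p => Vpm r p.1 p.2) (fun p => Vpm r' p.1 p.2)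
     (eps_pm t) (eps_pm t').
  rewrite sum_aff2 card_prod !card_ord.
  rewrite -(pair_big xpredT xpredT (fun i j => V r i j)) /=.
  rewrite -(pair_big xpredT xpredT (fun i j => V r' i j)) /=.
  rewrite -(pair_big xpredT xpredT (fun i j => V r i j * V r' i j)) /=.
  rewrite innsum // !big1 // ?mulr0 ?addr0.
  move/eqP; rewrite eqz_nat => /eqP; exact: L8.
Qed.

Local Close Scope ring_scope.

Theorem mainTheorem4 (a : nat) :
  0 < a ->
  (exists H : 'M[int]_(4 * a), hadamard H) ->
  exists Fs : 'I_(4 * a - 2) -> 'M['I_2]_(4, 2 * a), MOFR Fs.
Proof. exact: main_aux. Qed.
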